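(* Let $X=\{x_i\}_{i=1}^n\subset\mathbb{R}^d$, $0<\varepsilon<1$, and $T=\{(x-y)/\|x-y\|: x\ne y\in X\}\cup\{0\}$. Suppose $\Pi\in\mathbb{R}^{k\times d}$ has $\varepsilon$-convex hull distortion for $X$. Then $$\forall x,y\in\mathrm{conv}(T):\ |\langle\Pi x,\Pi y\rangle-\langle x,y\rangle|\le 6\varepsilon.$$
   Context: Norms and inner products are Euclidean. $\Pi$ has $\varepsilon$-convex hull distortion for $X$ if $\big|\|\Pi z\|-\|z\|\big|\le\varepsilon$ for all $z\in\mathrm{conv}(\{(x-y)/\|x-y\|: x\ne y\in X\})$. *)

(* Defs.v *)
From HB Require Import structures.
From mathcomp Require Import all_boot all_order all_algebra.
Set Implicit Arguments. Unset Strict Implicit. Unset Printing Implicit Defensive.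
Import Order.TTheory GRing.Theory Num.Theory.
Local Open Scope ring_scope.

Definition dotv (R : rcfType) (d : nat) (u v : 'cV[R]_d) : R :=
  \sum_(i < d) u i 0 * v i 0.

Definition normv (R : rcfType) (d : nat) (u : 'cV[R]_d) : R :=
  Num.sqrt (dotv u u).

Definition conv (R : rcfType) (d : nat) (S : 'cV[R]_d -> Prop) (z : 'cV[R]_d) : Prop :=
  exists (m : nat) (p : 'I_m -> 'cV[R]_d) (l : 'I_m -> R),
    (forall i, S (p i)) /\ (forall i, 0 <= l i) /\
    \sum_(i < m) l i = 1 /\ z = \sum_(i < m) l i *: p i.

Definition chords (R : rcfType) (d n : nat) (x : 'I_n -> 'cV[R]_d) (z : 'cV[R]_d) : Prop :=
  exists i j : 'I_n, x i != x j /\ z = (normv (x i - x j))^-1 *: (x i - x j).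

Definition chords0 (R : rcfType) (d n : nat) (x : 'I_n -> 'cV[R]_d) (z : 'cV[R]_d) : Prop :=
  chords x z \/ z = 0.

Definition convex_hull_distortion (R : rcfType) (d n k : nat)
  (Pi : 'M[R]_(k, d)) (x : 'I_n -> 'cV[R]_d) (eps : R) : Prop :=
  forall z, conv (chords x) z -> `| normv (Pi *m z) - normv z | <= eps.

(* Main.v *)
Require Import Defs.
From HB Require Import structures.
From mathcomp Require Import all_boot all_order all_algebra.
From mathcomp Require Import ring lra.
Import Order.TTheory GRing.Theory Num.Theory.
Local Open Scope ring_scope.

Set Implicit Arguments. Unset Strict Implicit.
Section Aux.
Context {R : rcfType} {d : nat}.
Implicit Types (u v w : 'cV[R]_d).

Lemma dotvC u v : dotv u v = dotv v u.
Proof. by apply: eq_bigr => i _; rewrite mulrC. Qed.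

Lemma dotvDl u v w : dotv (u + v) w = dotv u w + dotv v w.
Proof. by rewrite /dotv -big_split; apply: eq_bigr => i _; rewrite !mxE mulrDl. Qed.

Lemma dotvZl a u v : dotv (a *: u) v = a * dotv u v.
Proof. by rewrite /dotv mulr_sumr; apply: eq_bigr => i _; rewrite !mxE mulrA. Qed.

Lemma dotvNl u v : dotv (- u) v = - dotv u v.
Proof. by rewrite -scaleN1r dotvZl mulN1r. Qed.

Lemma dotvBl u v w : dotv (u - v) w = dotv u w - dotv v w.
Proof. by rewrite dotvDl dotvNl. Qed.

Lemma dotvDr u v w : dotv w (u + v) = dotv w u + dotv w v.
Proof. by rewrite dotvC dotvDl !(dotvC w). Qed.

Lemma dotvBr u v w : dotv w (u - v) = dotv w u - dotv w v.
Proof. by rewrite dotvC dotvBl !(dotvC w). Qed.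

Lemma dotvZr a u v : dotv v (a *: u) = a * dotv v u.
Proof. by rewrite dotvC dotvZl dotvC. Qed.

Lemma dotv_suml m (F : 'I_m -> 'cV[R]_d) v :
  dotv (\sum_(i < m) F i) v = \sum_(i < m) dotv (F i) v.
Proof.
rewrite /dotv exchange_big /=; apply: eq_bigr => i _.
by rewrite summxE mulr_suml.
Qed.

Lemma dotv_ge0 u : 0 <= dotv u u.
Proof. by apply: sumr_ge0 => i _; rewrite -expr2 sqr_ge0. Qed.

Lemma dotv_eq0 u : dotv u u = 0 -> u = 0.
Proof.
move=> H; apply/matrixP => i j; rewrite (ord1 j) mxE.
have : u i 0 * u i 0 = 0.
  by apply: (psumr_eq0P _ H) => // k _; rewrite -expr2 sqr_ge0.
by move/eqP; rewrite mulf_eq0 orbb => /eqP.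
Qed.

Lemma normv_sq u : normv u ^+ 2 = dotv u u.
Proof. by rewrite /normv sqr_sqrtr // dotv_ge0. Qed.

Lemma normv_ge0 u : 0 <= normv u.
Proof. exact: sqrtr_ge0. Qed.

Lemma normvN u : normv (- u) = normv u.
Proof. by rewrite /normv dotvNl dotvC dotvNl opprK. Qed.

Lemma conv_comb (S : 'cV[R]_d -> Prop) a b u v :
  0 <= a -> 0 <= b -> a + b = 1 -> conv S u -> conv S v ->
  conv S (a *: u + b *: v).
Proof.
move=> a0 b0 ab [m1 [p1 [l1 [S1 [l10 [s1 ->]]]]]] [m2 [p2 [l2 [S2 [l20 [s2 ->]]]]]].
pose p i := match @split m1 m2 i with inl k => p1 k | inr k => p2 k end.
pose l i := match @split m1 m2 i with inl k => a * l1 k | inr k => b * l2 k end.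
have sl k : split (lshift m2 k) = inl k := unsplitK (inl k).
have sr k : split (rshift m1 k) = inr k := unsplitK (inr k).
exists (m1 + m2), p, l; split; [|split; [|split]].
- by move=> i; rewrite /p; case: split.
- by move=> i; rewrite /l; case: split => k; apply: mulr_ge0.
- rewrite big_split_ord /l /=.
  under eq_bigr do rewrite sl.
  under [X in _ + X]eq_bigr do rewrite sr.
  by rewrite -!mulr_sumr s1 s2 !mulr1.
- rewrite big_split_ord /l /p /=.
  under [X in _ = X + _]eq_bigr do rewrite sl.
  under [X in _ = _ + X]eq_bigr do rewrite sr.
  by rewrite !scaler_sumr; congr (_ + _); apply: eq_bigr => i _; rewrite scalerA.
Qed.

Lemma conv_single (S : 'cV[R]_d -> Prop) z : S z -> conv S z.
Proof.
move=> Sz; exists 1%N, (fun _ => z), (fun _ => 1); split; [by []|split; [by []|]].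
by rewrite !big_ord1 scale1r.
Qed.

Lemma conv_sub (S T : 'cV[R]_d -> Prop) k0 :
  conv T k0 -> (forall z, S z -> conv T z) ->
  forall m (p : 'I_m -> 'cV[R]_d) l, (forall i, S (p i)) -> (forall i, 0 <= l i) ->
  exists k, conv T k /\ \sum_(i < m) l i *: p i = (\sum_(i < m) l i) *: k.
Proof.
move=> Tk0 ST; elim=> [|m IH] p l Sp l0.
  by exists k0; split => //; rewrite !big_ord0 scale0r.
have [k [Tk ek]] := IH (fun i => p (widen_ord (leqnSn m) i)) (fun i => l (widen_ord (leqnSn m) i)) (fun i => Sp _) (fun i => l0 _).
rewrite !big_ord_recr /= ek.
set s := \sum_(i < m) _.
have s0 : 0 <= s by apply: sumr_ge0.
have lm0 := l0 ord_max.
have [e0|ne0] := eqVneq (s + l ord_max) 0.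
  have hs : s = 0 by lra.
  have hl : l ord_max = 0 by lra.
  by exists k0; split => //; rewrite e0 hs hl !scale0r addr0.
exists ((s / (s + l ord_max)) *: k + (l ord_max / (s + l ord_max)) *: p ord_max); split.
  apply: conv_comb => //.
  - by apply: divr_ge0 => //; lra.
  - by apply: divr_ge0 => //; lra.
  - by rewrite -mulrDl divff.
  - exact: ST.
by rewrite scalerDr !scalerA !mulrA !(mulrC (s + _)) -!mulrA divff // !mulr1.
Qed.

Lemma conv_norm_le1 (S : 'cV[R]_d -> Prop) w :
  (forall z, S z -> dotv z z <= 1) -> conv S w -> dotv w w <= 1.
Proof.
move=> HS [m [p [l [Sp [l0 [s1 ew]]]]]].
have H : 0 <= \sum_(i < m) l i * dotv (p i - w) (p i - w).
  by apply: sumr_ge0 => i _; apply: mulr_ge0 => //; apply: dotv_ge0.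
have E : \sum_(i < m) l i * dotv (p i - w) (p i - w) =
   \sum_(i < m) l i * dotv (p i) (p i) - dotv w w.
  under eq_bigr do rewrite dotvBl !dotvBr (dotvC w (p _)).
  have E1 : \sum_(i < m) l i * dotv (p i) w = dotv w w.
    transitivity (dotv (\sum_(i < m) l i *: p i) w); last by rewrite -ew.
    by rewrite dotv_suml; apply: eq_bigr => i _; rewrite dotvZl.
  have E2 : \sum_(i < m) l i * (dotv (p i) (p i) - dotv (p i) w - (dotv (p i) w - dotv w w)) =
    \sum_(i < m) l i * dotv (p i) (p i) - (\sum_(i < m) l i * dotv (p i) w) *+ 2 +
    (\sum_(i < m) l i) * dotv w w.
    rewrite mulr_suml -sumrMnl -sumrB -big_split /=; apply: eq_bigr => i _.
    by rewrite mulr2n; ring.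
  by rewrite E2 E1 s1 mul1r mulr2n; ring.
have : \sum_(i < m) l i * dotv (p i) (p i) <= 1.
  rewrite -s1; apply: ler_sum => i _; rewrite -[X in _ <= X]mulr1.
  by apply: ler_wpM2l => //; apply: HS.
rewrite E in H; lra.
Qed.

Lemma sq_bound (a b e : R) : 0 <= a -> 0 <= b -> b <= 1 -> `|a - b| <= e -> e < 1 ->
  `|a ^+ 2 - b ^+ 2| <= 3 * e.
Proof.
move=> a0 b0 b1 ab e1.
have -> : a ^+ 2 - b ^+ 2 = (a - b) * (a + b) by ring.
rewrite normrM (ger0_norm (addr_ge0 a0 b0)) mulrC.
have hab : a + b <= 3.
  have : a - b <= e by apply: le_trans ab; apply: ler_norm.
  lra.
by apply: ler_pM => //; apply: addr_ge0.
Qed.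

End Aux.


Lemma dotv_polar (R : rcfType) (d : nat) (a b : 'cV[R]_d) :
  dotv (a + b) (a - b) = dotv a a - dotv b b.
Proof. rewrite dotvDl !dotvBr (dotvC b a). ring. Qed.

Lemma chord_dot (R : rcfType) (d n : nat) (x : 'I_n -> 'cV[R]_d) z :
  chords x z -> dotv z z <= 1.
Proof.
move=> [i [j [hij ->]]].
set v := x i - x j.
have nz : normv v != 0.
  apply/negP => /eqP h; move: hij; rewrite -subr_eq0 -/v.
  suff -> : v = 0 by rewrite eqxx.
  by apply: dotv_eq0; rewrite -normv_sq h expr0n.
rewrite dotvZl dotvZr -normv_sq mulrA -expr2 -exprMn mulVf // expr1n. by [].
Qed.

Lemma chords_neg (R : rcfType) (d n : nat) (x : 'I_n -> 'cV[R]_d) z :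
  chords x z -> chords x (- z).
Proof.
move=> [i [j [hij ->]]]; exists j, i; split; first by rewrite eq_sym.
by rewrite -scalerN opprB -normvN opprB.
Qed.

Lemma conv_neg (R : rcfType) (d n : nat) (x : 'I_n -> 'cV[R]_d) z :
  conv (chords x) z -> conv (chords x) (- z).
Proof.
move=> [m [p [l [Sp [l0 [s1 ->]]]]]].
exists m, (fun i => - p i), l; split; [|split; [|split]] => //.
- by move=> i; apply: chords_neg.
- by rewrite -sumrN; apply: eq_bigr => i _; rewrite scalerN.
Qed.

Unset Implicit Arguments. Set Strict Implicit.
Theorem lemmaB3 (R : rcfType) (d n k : nat) (x : 'I_n -> 'cV[R]_d) (eps : R)
  (Pi : 'M[R]_(k, d)) :
  0 < eps -> eps < 1 ->
  convex_hull_distortion Pi x eps ->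
  forall u v : 'cV[R]_d, conv (chords0 x) u -> conv (chords0 x) v ->
    `| dotv (Pi *m u) (Pi *m v) - dotv u v | <= 6 * eps.
Proof.
move=> e0 e1 HD u v Hu Hv.
case: (boolP [exists i, [exists j, x i != x j]]).
  move/existsP=> [i /existsP [j hij]].
  set c := (normv (x i - x j))^-1 *: (x i - x j).
  have Cc : chords x c by exists i, j.
  have K0 : conv (chords x) 0.
    have := @conv_comb _ _ (chords x) (1/2) (1/2) c (- c).
    rewrite scalerN addrN; apply; try lra; [exact: (conv_single Cc)|exact: (conv_single (chords_neg Cc))].
  have sub z : chords0 x z -> conv (chords x) z.
    by case=> [/conv_single|->].
  have toK z : conv (chords0 x) z -> conv (chords x) z.
    move=> [m [p [l [Sp [l0 [s1 ->]]]]]].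
    by have [k0 [Tk ->]] := conv_sub K0 sub Sp l0; rewrite s1 scale1r.
  have Ku := toK _ Hu; have Kv := toK _ Hv.
  set w1 := (1/2) *: u + (1/2) *: v.
  set w2 := (1/2) *: u + (1/2) *: (- v).
  have Kw1 : conv (chords x) w1 by apply: conv_comb => //; lra.
  have Kw2 : conv (chords x) w2 by apply: conv_comb => //; try lra; exact: conv_neg.
  have eu : u = w1 + w2 by apply/matrixP => a b; rewrite !mxE; lra.
  have ev : v = w1 - w2 by apply/matrixP => a b; rewrite !mxE; lra.
  have fb w : conv (chords x) w ->
      `| dotv (Pi *m w) (Pi *m w) - dotv w w | <= 3 * eps.
    move=> Kw; rewrite -!normv_sq; apply: sq_bound => //.
    - exact: normv_ge0.
    - exact: normv_ge0.
    - rewrite /normv -sqrtr1 ler_sqrt //; apply: conv_norm_le1 Kw.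
      exact: chord_dot.
    - exact: HD.
  rewrite eu ev mulmxDr mulmxBr !dotv_polar.
  have -> : dotv (Pi *m w1) (Pi *m w1) - dotv (Pi *m w2) (Pi *m w2) -
     (dotv w1 w1 - dotv w2 w2) =
     (dotv (Pi *m w1) (Pi *m w1) - dotv w1 w1) -
     (dotv (Pi *m w2) (Pi *m w2) - dotv w2 w2) by ring.
  apply: le_trans (ler_normB _ _) _.
  have := fb _ Kw1; have := fb _ Kw2; lra.
rewrite negb_exists => /forallP hx.
have z0 z : conv (chords0 x) z -> z = 0.
  move=> [m [p [l [Sp [l0 [s1 ->]]]]]].
  apply: big1 => i _; case: (Sp i) => [[a [b [hab _]]]|->]; last by rewrite scaler0.
  by move: (hx a); rewrite negb_exists => /forallP /(_ b); rewrite hab.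
rewrite (z0 _ Hu) (z0 _ Hv) mulmx0 /dotv big1 ?big1 ?subrr ?normr0.
- by rewrite mulr_ge0 // ltW.
- by move=> i _; rewrite mxE mul0r.
- by move=> i _; rewrite mxE mul0r.
Qed.
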